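(* Let $q=p^k$ with $p$ prime, and let $s\ge1$ be an integer. Then the Hamming space $Q_{q^2s}^n$ contains at least $q^{\binom{n}{2}(1+o(1))}$ mutually nonequivalent topolinear MDS codes, as $n\to\infty$.
   Context: $Q_Q$ denotes an alphabet of size $Q$ and $Q_Q^n$ the Hamming space of $n$-tuples. An MDS code (code distance 2) of length $n$ is a set $M\subseteq Q_Q^n$ with $|M|=Q^{n-1}$ and any two distinct elements at Hamming distance at least $2$. Two sets are equivalent if one is mapped to the other by an isometry of the Hamming space (a composition of a coordinate permutation and an isotopism $\overline{x}\mapsto(\tau_1x_1,\dots,\tau_nx_n)$, $\tau_i$ permutations of the alphabet). $M$ is topolinear if the group of isotopisms mapping $M$ onto $M$ contains a subgroup of cardinality $|M|$ acting transitively on $M$. *)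

(* Defs.v *)
From HB Require Import structures.
From mathcomp Require Import all_boot all_order all_fingroup.
Set Implicit Arguments. Unset Strict Implicit. Unset Printing Implicit Defensive.

Notation word n Q := {ffun 'I_n -> 'I_Q} (only parsing).

Definition hdist (n Q : nat) (x y : word n Q) : nat := #|[set i | x i != y i]|.

Definition is_MDS (n Q : nat) (M : {set word n Q}) : Prop :=
  #|M| = Q ^ (n - 1) /\
  (forall x y, x \in M -> y \in M -> x != y -> 2 <= hdist x y).

Definition isotopism_map (n Q : nat) (tau : 'I_n -> {perm 'I_Q})
  (x : word n Q) : word n Q := [ffun i => tau i (x i)].

Definition isometry_map (n Q : nat) (sigma : {perm 'I_n})
  (tau : 'I_n -> {perm 'I_Q}) (x : word n Q) : word n Q :=
  [ffun i => tau i (x (sigma i))].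

Definition equivalent (n Q : nat) (M1 M2 : {set word n Q}) : Prop :=
  exists (sigma : {perm 'I_n}) (tau : 'I_n -> {perm 'I_Q}),
    isometry_map sigma tau @: M1 = M2.

Definition is_isotopism (n Q : nat) (g : {perm word n Q}) : Prop :=
  exists tau : 'I_n -> {perm 'I_Q}, forall x, g x = isotopism_map tau x.

Definition topolinear (n Q : nat) (M : {set word n Q}) : Prop :=
  exists H : {group {perm word n Q}},
    [/\ (forall g, g \in H -> is_isotopism g /\ g @: M = M),
        #|H| = #|M| &
        (forall x y, x \in M -> y \in M -> exists2 h, h \in H & h x = y)].

(* Main.v *)
Require Import Defs.
From HB Require Import structures.
From mathcomp Require Import all_boot all_order all_fingroup.
From mathcomp Require Import all_algebra.
From mathcomp Require Import zify ring.
Set Implicit Arguments. Unset Strict Implicit. Unset Printing Implicit Defensive.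
Import GRing.Theory.

Lemma sq_le_pow2 t : 4 <= t -> t * t <= 2 ^ t.
Proof.
elim: t => // t IH; rewrite leq_eqVlt => /orP[/eqP <-//|]; rewrite ltnS => H4.
have := IH H4; rewrite expnS; nia.
Qed.

Lemma pow2_big a b : exists N, forall n, N <= n -> b * n ^ a <= 2 ^ n.
Proof.
exists (2 ^ (a + b + 4)) => n Hn.
have n0 : 0 < n by apply: leq_trans Hn; rewrite expn_gt0.
set t := trunc_log 2 n.
have h1 : 2 ^ t <= n by apply: trunc_logP.
have h2 : n < 2 ^ t.+1 by apply: trunc_log_ltn.
have ht : a + b + 4 <= t.
  rewrite leqNgt; apply/negP => H.
  have : 2 ^ t.+1 <= 2 ^ (a + b + 4) by rewrite leq_exp2l.
  lia.
have h3 : b * n ^ a <= 2 ^ b * 2 ^ (t.+1 * a).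
  apply: leq_mul; first exact/ltnW/ltn_expl.
  rewrite expnM.
  have [->|a0] := posnP a; [by rewrite !expn0 | by rewrite leq_exp2r // ltnW].
apply: (leq_trans h3); rewrite -expnD leq_exp2l //.
have := sq_le_pow2 (_ : 4 <= t); nia.
Qed.

Section Code.
Variables (R : finComNzRingType) (Z : finZmodType) (Q n : nat).
Local Notation T := (R * R * Z)%type.
Variables (e : T -> 'I_Q) (d : 'I_Q -> T).
Hypotheses (edK : cancel e d) (deK : cancel d e).
Variable E : 'I_n -> 'I_n -> R.
Local Open Scope ring_scope.

Definition av (x : {ffun 'I_n -> 'I_Q}) i := (d (x i)).1.1.
Definition bv (x : {ffun 'I_n -> 'I_Q}) i := (d (x i)).1.2.
Definition zv (x : {ffun 'I_n -> 'I_Q}) i := (d (x i)).2.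
Definition Phi (a : 'I_n -> R) := \sum_i \sum_j E i j * (a i * a j).
Definition inM (x : {ffun 'I_n -> 'I_Q}) : bool :=
  [&& \sum_i av x i == 0, \sum_i bv x i == Phi (av x) & \sum_i zv x i == 0].
Definition code := [set x | inM x].

Lemma sum_eq_except (V : zmodType) (f g : 'I_n -> V) l :
  (forall i, i != l -> f i = g i) -> \sum_i f i = \sum_i g i -> f l = g l.
Proof.
move=> H; rewrite (bigD1 l) //= [in RHS](bigD1 l) //= (eq_bigr (fun i => g i)) => [/addIr //|i /H//].
Qed.

Lemma Phi_ext a a' : a =1 a' -> Phi a = Phi a'.
Proof. by move=> h; apply: eq_bigr => i _; apply: eq_bigr => j _; rewrite !h. Qed.

Lemma code_agree x y l : x \in code -> y \in code ->
  (forall i, i != l -> x i = y i) -> x = y.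
Proof.
rewrite !inE => /and3P[/eqP ax /eqP bx /eqP zx] /and3P[/eqP ay /eqP by_ /eqP zy] H.
have ha : av x =1 av y.
  move=> i; have [->|il] := eqVneq i l; last by rewrite /av H.
  by apply: (sum_eq_except (l:=l)) => [k kl|]; [rewrite /av H | rewrite ax ay].
have hb : bv x l = bv y l.
  apply: (sum_eq_except (l:=l)) => [k kl|]; first by rewrite /bv H.
  by rewrite bx by_; apply: Phi_ext.
have hz : zv x l = zv y l.
  by apply: (sum_eq_except (l:=l)) => [k kl|]; [rewrite /zv H | rewrite zx zy].
apply/ffunP => i; have [->|il] := eqVneq i l; last exact: H.
apply: (can_inj deK); move: (ha l) hb hz; rewrite /av /bv /zv.
by case: (d (x l)) => [[? ?] ?]; case: (d (y l)) => [[? ?] ?] /= -> -> ->.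
Qed.

Lemma code_dist x y : x \in code -> y \in code -> x != y -> (2 <= hdist x y)%N.
Proof.
move=> xM yM; apply: contraR; rewrite -ltnNge ltnS /hdist => h1.
case: (pickP (mem [set i | x i != y i])) => [l ls|S0].
  apply/eqP; apply: (code_agree (l:=l)) => // i il; apply/eqP; apply: contraNT il => ni.
  by apply/eqP; apply: (card_le1_eqP h1); rewrite // inE.
by apply/eqP/ffunP => i; have := S0 i; rewrite !inE; case: (x i =P y i).
Qed.


Section Card.
Variable l : 'I_n.
Definition piw (x : {ffun 'I_n -> 'I_Q}) : {ffun 'I_n.-1 -> 'I_Q} :=
  [ffun j => x (lift l j)].

Definition astar (w : {ffun 'I_n.-1 -> 'I_Q}) := - \sum_j (d (w j)).1.1.
Definition af (w : {ffun 'I_n.-1 -> 'I_Q}) i :=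
  if unlift l i is Some j then (d (w j)).1.1 else astar w.
Definition ext (w : {ffun 'I_n.-1 -> 'I_Q}) : {ffun 'I_n -> 'I_Q} :=
  [ffun i => if unlift l i is Some j then w j else
     e ((astar w, Phi (af w) - \sum_j (d (w j)).1.2), - \sum_j (d (w j)).2)].

Lemma sum_lift (V : zmodType) (F : 'I_n -> V) :
  \sum_i F i = F l + \sum_(j < n.-1) F (lift l j).
Proof. by rewrite (bigD1_ord l (P := xpredT)). Qed.

Lemma ext_code w : ext w \in code.
Proof.
have hd : forall j, d (ext w (lift l j)) = d (w j) by move=> j; rewrite ffunE liftK.
have hl : d (ext w l) = ((astar w, Phi (af w) - \sum_j (d (w j)).1.2), - \sum_j (d (w j)).2).
  by rewrite ffunE unlift_none edK.
have ha : av (ext w) =1 af w.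
  move=> i; rewrite /av /af; case: (unliftP l i) => [j ->|->].
    by rewrite hd.
  by rewrite hl.
have s1 : forall (V : zmodType) (G : R * R * Z -> V),
    \sum_(j < n.-1) G (d (ext w (lift l j))) = \sum_j G (d (w j)).
  by move=> V G; apply: eq_bigr => j _; rewrite hd.
rewrite inE; apply/and3P; split; apply/eqP.
- by rewrite sum_lift /av hl /= (s1 _ (fun t => t.1.1)) addNr.
- by rewrite (Phi_ext ha) sum_lift /bv hl /= (s1 _ (fun t => t.1.2)) subrK.
- by rewrite sum_lift /zv hl /= (s1 _ (fun t => t.2)) addNr.
Qed.

Lemma piw_ext w : piw (ext w) = w.
Proof. by apply/ffunP => j; rewrite !ffunE liftK. Qed.

Lemma card_code : #|code| = (Q ^ n.-1)%N.
Proof.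
have inj : {in code &, injective piw}.
  move=> x y xM yM /ffunP h; apply: (code_agree (l := l)) => // i.
  by case: (unliftP l i) => [j ->|->]; [rewrite -!(ffunE (fun j => x (lift l j))) -!(ffunE (fun j => y (lift l j))) h | rewrite eqxx].
rewrite -(card_in_imset inj).
have -> : piw @: code = setT.
  by apply/setP => w; rewrite inE; apply/imsetP; exists (ext w); rewrite ?ext_code ?piw_ext.
by rewrite cardsT card_ffun !card_ord.
Qed.
End Card.

Definition Lf (al : 'I_n -> R) i := \sum_j (E i j + E j i) * al j.

Lemma Lf_add al be i : Lf (fun j => al j + be j) i = Lf al i + Lf be i.
Proof. by rewrite /Lf -big_split; apply: eq_bigr => j _; rewrite mulrDr. Qed.

Lemma Phi_add a al :
  Phi (fun i => a i + al i) = Phi a + Phi al + \sum_i a i * Lf al i.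
Proof.
have X : \sum_i \sum_j E j i * (a i * al j) = \sum_i \sum_j E i j * (al i * a j).
  by rewrite exchange_big; apply: eq_bigr => i _; apply: eq_bigr => j _; rewrite [al i * _]mulrC.
have Y : \sum_i a i * Lf al i =
   \sum_i \sum_j E i j * (a i * al j) + \sum_i \sum_j E j i * (a i * al j).
  rewrite -big_split; apply: eq_bigr => i _; rewrite /Lf mulr_sumr -big_split.
  by apply: eq_bigr => j _ /=; ring.
rewrite Y X /Phi -!big_split; apply: eq_bigr => i _; rewrite -!big_split.
by apply: eq_bigr => j _ /=; ring.
Qed.

Definition fmap (u : {ffun 'I_n -> 'I_Q}) i (t : T) : T :=
  ((t.1.1 + av u i, t.1.2 + bv u i + t.1.1 * Lf (av u) i), t.2 + zv u i).

Lemma fmap_inj u i : injective (fmap u i).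
Proof.
move=> [[a b] z] [[a1 b1] z1] [] /addIr ha; rewrite ha => /addIr/addIr hb /addIr hz.
by rewrite hb hz.
Qed.

Definition fI u i (c : 'I_Q) := e (fmap u i (d c)).
Lemma fI_inj u i : injective (fI u i).
Proof. by move=> c c' /(can_inj edK)/fmap_inj/(can_inj deK). Qed.

Definition tau u i : {perm 'I_Q} := perm (@fI_inj u i).
Definition gmap u (x : {ffun 'I_n -> 'I_Q}) : {ffun 'I_n -> 'I_Q} :=
  isotopism_map (tau u) x.

Lemma d_gmap u x i : d (gmap u x i) = fmap u i (d (x i)).
Proof. by rewrite ffunE permE /fI edK. Qed.

Lemma gmap_inj u : injective (gmap u).
Proof.
move=> x y /ffunP h; apply/ffunP => i; have := h i; rewrite !ffunE; exact: perm_inj.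
Qed.

Definition gp u : {perm {ffun 'I_n -> 'I_Q}} := perm (@gmap_inj u).

Definition x0 : {ffun 'I_n -> 'I_Q} := [ffun _ => e ((0, 0), 0)].

Lemma x0_code : x0 \in code.
Proof.
have hd : forall i, d (x0 i) = ((0, 0), 0) by move=> i; rewrite ffunE edK.
rewrite inE; apply/and3P; split; apply/eqP.
- by apply: big1 => i _; rewrite /av hd.
- rewrite big1 => [|i _]; last by rewrite /bv hd.
  by rewrite /Phi big1 // => i _; apply: big1 => j _; rewrite /av !hd mul0r mulr0.
- by apply: big1 => i _; rewrite /zv hd.
Qed.

Lemma gmap_code u x : u \in code -> x \in code -> gmap u x \in code.
Proof.
rewrite !inE => /and3P[/eqP au /eqP bu /eqP zu] /and3P[/eqP ax /eqP bx /eqP zx].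
have ha : av (gmap u x) =1 fun i => av x i + av u i by move=> i; rewrite /av d_gmap.
apply/and3P; split; apply/eqP.
- have -> : \sum_i av (gmap u x) i = \sum_i (av x i + av u i).
    by apply: eq_bigr => i _; apply: ha.
  by rewrite big_split /= ax au addr0.
- rewrite (Phi_ext ha) Phi_add -bx -bu -!big_split.
  by apply: eq_bigr => i _; rewrite /bv /av d_gmap.
- have -> : \sum_i zv (gmap u x) i = \sum_i (zv x i + zv u i).
    by apply: eq_bigr => i _; rewrite /zv d_gmap.
  by rewrite big_split /= zx zu addr0.
Qed.

Lemma gmap_x0 u : gmap u x0 = u.
Proof.
apply/ffunP => i; apply: (can_inj deK); rewrite d_gmap ffunE edK /fmap /=.
rewrite !add0r mul0r addr0 /av /bv /zv.
by case: (d (u i)) => [[? ?] ?].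
Qed.

Lemma gmap_comp u v x : gmap u (gmap v x) = gmap (gmap u v) x.
Proof.
apply/ffunP => i; apply: (can_inj deK); rewrite !d_gmap.
have ha : av (gmap u v) i = av v i + av u i by rewrite /av d_gmap.
have hb : bv (gmap u v) i = bv v i + bv u i + av v i * Lf (av u) i by rewrite /bv /av d_gmap.
have hz : zv (gmap u v) i = zv v i + zv u i by rewrite /zv d_gmap.
have hL : Lf (av (gmap u v)) i = Lf (av v) i + Lf (av u) i.
  by rewrite -Lf_add; apply: eq_bigr => j _; rewrite /av d_gmap.
rewrite /fmap ha hb hz hL /=; congr ((_, _), _); [ring | ring | by rewrite addrA].
Qed.

Lemma gmap_id x : gmap x0 x = x.
Proof.
apply/ffunP => i; apply: (can_inj deK); rewrite d_gmap /fmap.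
have hd : forall i, d (x0 i) = ((0, 0), 0) by move=> j; rewrite ffunE edK.
have hL : Lf (av x0) i = 0 by apply: big1 => j _; rewrite /av hd mulr0.
rewrite hL /av /bv /zv !hd /= !addr0 mulr0 addr0.
by case: (d (x i)) => [[? ?] ?].
Qed.

Lemma gpM u v : (gp u * gp v)%g = gp (gmap v u).
Proof. by apply/permP => x; rewrite permM !permE gmap_comp. Qed.

Lemma gp1 : gp x0 = 1%g.
Proof. by apply/permP => x; rewrite permE perm1 gmap_id. Qed.

Definition Hset := gp @: code.

Lemma Hgroup : group_set Hset.
Proof.
apply/andP; split; first by apply/imsetP; exists x0; rewrite ?x0_code ?gp1.
apply/subsetP => _ /mulsgP[_ _ /imsetP[u uM ->] /imsetP[v vM ->] ->].
by rewrite gpM; apply/imsetP; exists (gmap v u); rewrite ?gmap_code.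
Qed.

Lemma code_topolinear : topolinear code.
Proof.
exists (Group Hgroup); split.
- move=> _ /imsetP[u uM ->]; split.
    by exists (tau u) => x; rewrite permE.
  apply/eqP; rewrite eqEcard card_imset ?leqnn ?andbT; last exact: perm_inj.
  by apply/subsetP => _ /imsetP[x xM ->]; rewrite permE gmap_code.
- apply: card_in_imset => u v uM vM h.
  by have := congr1 (fun g : {perm _} => g x0) h; rewrite /= !permE !gmap_x0.
- move=> x y xM yM; exists ((gp x)^-1 * gp y)%g.
    have gH : forall w, w \in code -> gp w \in Group Hgroup by move=> w wM; apply/imsetP; exists w.
    by rewrite groupM ?groupV ?gH.
  have hx : (gp x)^-1%g x = x0 by apply: (@perm_inj _ (gp x)); rewrite permKV permE gmap_x0.
  by rewrite permM hx permE gmap_x0.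
Qed.

Lemma code_MDS (l : 'I_n) : is_MDS code.
Proof. by split; [rewrite (card_code l) subn1 | exact: code_dist]. Qed.

End Code.

Section Rep.
Variables (n Q : nat).
Local Notation word := {ffun 'I_n -> 'I_Q}.
Local Notation W := ({perm 'I_n} * {ffun 'I_n -> {perm 'I_Q}})%type.

Definition iso (w : W) : word -> word := isometry_map w.1 w.2.

Lemma iso_inj w : injective (iso w).
Proof.
move=> x y /ffunP h; apply/ffunP => j; have := h (w.1^-1%g j).
by rewrite !ffunE permKV; exact: perm_inj.
Qed.

Definition equivb (M1 M2 : {set word}) := [exists w : W, iso w @: M1 == M2].

Lemma equiv_b M1 M2 : equivalent M1 M2 -> equivb M1 M2.
Proof.
case=> sigma [tau h]; apply/existsP; exists (sigma, [ffun i => tau i]).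
rewrite -h; apply/eqP; apply: eq_imset => x; apply/ffunP => i; rewrite !ffunE //.
Qed.

Definition phi (p : {set word} * option (bool * W)) : {set word} :=
  match p.2 with
  | None => p.1
  | Some (true, w) => iso w @: p.1
  | Some (false, w) => iso w @^-1: p.1
  end.

Lemma rep (C : {set {set word}}) : exists F : {set {set word}},
  [/\ F \subset C,
      forall M1 M2, M1 \in F -> M2 \in F -> M1 != M2 -> ~ equivalent M1 M2 &
      #|C| <= #|F| * (1 + 2 * #|{: W}|)].
Proof.
pose P := fun F : {set {set word}} => (F \subset C) &&
   [forall M1 in F, forall M2 in F, (M1 != M2) ==> ~~ equivb M1 M2].
have P0 : P set0.
  by rewrite /P sub0set; apply/forall_inP => M1; rewrite inE.
case: (maxset_exists P0) => F /maxsetP [PF maxF] _.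
have /andP[FC /forall_inP hF0] := PF.
have hF : forall M1 M2, M1 \in F -> M2 \in F -> M1 != M2 -> ~~ equivb M1 M2.
  by move=> M1 M2 h1 h2 ne; have /forall_inP := hF0 _ h1; move/(_ _ h2)/implyP; apply.
exists F; split => //.
  by move=> M1 M2 h1 h2 ne /equiv_b; apply/negP; exact: hF.
pose U := phi @: setX F setT.
have CU : C \subset U.
  apply/subsetP => M MC; apply: contraT => MU.
  have PM : P (M |: F).
    apply/andP; split.
      by apply/subsetP => X /setU1P[->//|XF]; apply: (subsetP FC).
    apply/forall_inP => M1 /setU1P[->|h1]; apply/forall_inP => M2 /setU1P[->|h2];
      apply/implyP => ne.
    - by rewrite eqxx in ne.
    - apply/negP => /existsP[w /eqP hw]; case/negP: MU.
      apply/imsetP; exists (M2, Some (false, w)); first by rewrite in_setX h2 in_setT.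
      apply/setP => x; rewrite /phi /= inE -hw mem_imset //; exact: iso_inj.
    - apply/negP => /existsP[w /eqP hw]; case/negP: MU.
      by apply/imsetP; exists (M1, Some (true, w)); rewrite ?in_setX ?h1 ?in_setT //= hw.
    - exact: hF.
  have := maxF _ PM (subsetUr _ _) => /setP/(_ M); rewrite setU11 => MF.
  case/negP: MU; apply/imsetP; exists (M, None) => //; by rewrite in_setX -MF in_setT.
apply: (leq_trans (subset_leq_card CU)); apply: (leq_trans (leq_imset_card _ _)).
by rewrite cardsX cardsT card_option card_prod card_bool add1n.
Qed.
End Rep.

Section Family.
Variables (R : finComNzRingType) (Z : finZmodType) (Q n : nat).
Local Notation T := (R * R * Z)%type.
Variables (e : T -> 'I_Q) (d : 'I_Q -> T).
Hypotheses (edK : cancel e d) (deK : cancel d e).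
Local Open Scope ring_scope.

Lemma sum_if (i : 'I_n) (c : 'I_n -> R) : \sum_k (if k == i then c k else 0) = c i.
Proof. by rewrite -big_mkcond /= big_pred1_eq. Qed.

Lemma code_Phi (E E' : 'I_n -> 'I_n -> R) (i0 : 'I_n) (a : 'I_n -> R) :
  \sum_i a i = 0 -> code d E = code d E' -> Phi E a = Phi E' a.
Proof.
move=> a0 hEE.
pose x : {ffun 'I_n -> 'I_Q} := [ffun k => e ((a k, if k == i0 then Phi E a else 0), 0)].
have hd : forall k, d (x k) = ((a k, if k == i0 then Phi E a else 0), 0).
  by move=> k; rewrite ffunE edK.
have ha : av d x =1 a by move=> k; rewrite /av hd.
have hb : \sum_k bv d x k = Phi E a.
  rewrite -(sum_if i0 (fun _ => Phi E a)); apply: eq_bigr => k _; by rewrite /bv hd.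
have xE : x \in code d E.
  rewrite inE; apply/and3P; split; apply/eqP.
  - by rewrite -[RHS]a0; apply: eq_bigr => k _; apply: ha.
  - by rewrite hb; apply: Phi_ext => k; rewrite ha.
  - by apply: big1 => k _; rewrite /zv hd.
move: xE; rewrite hEE inE => /and3P[_ /eqP hb' _].
by rewrite -hb hb'; apply: Phi_ext.
Qed.

Definition dl (i j : 'I_n) (k : 'I_n) : R :=
  (if k == i then 1 else 0) - (if k == j then 1 else 0).

Lemma dot_delta (c : 'I_n -> R) i j : \sum_k c k * dl i j k = c i - c j.
Proof.
rewrite -(sum_if i c) -(sum_if j c) -sumrB; apply: eq_bigr => k _.
by rewrite /dl mulrBr; case: (k == i); case: (k == j); rewrite ?mulr1 ?mulr0.
Qed.

Lemma sum_dl i j : i != j -> \sum_k dl i j k = 0.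
Proof.
move=> _; rewrite (eq_bigr (fun k => 1 * dl i j k)) => [|k _]; last by rewrite mul1r.
by rewrite dot_delta subrr.
Qed.

Lemma Phi_delta (E : 'I_n -> 'I_n -> R) (i j : 'I_n) :
  (forall k l : 'I_n, (l <= k)%N -> E k l = 0) -> (i < j)%N ->
  Phi E (dl i j) = - E i j.
Proof.
move=> hE lt.
have -> : Phi E (dl i j) = \sum_k (E k i - E k j) * dl i j k.
  apply: eq_bigr => k _.
  rewrite (eq_bigr (fun l => (E k l * dl i j k) * dl i j l)) => [|l _]; last by rewrite mulrA.
  by rewrite dot_delta mulrBl.
rewrite dot_delta (hE i i) ?(hE j i) ?(hE j j) ?leqnn ?(ltnW lt) //; ring.
Qed.

Definition Eg (g : {ffun {set 'I_n} -> R}) (i j : 'I_n) : R :=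
  if (i < j)%N then g [set i; j] else 0.

Definition G0 := [set g : {ffun {set 'I_n} -> R} |
  g \in pffun_on 0 [set A : {set 'I_n} | #|A| == 2%N] predT].

Lemma card_G0 : #|G0| = (#|R| ^ 'C(n, 2))%N.
Proof. by rewrite cardsE card_pffun_on card_draws card_ord. Qed.

Lemma G0_zero (g : {ffun {set 'I_n} -> R}) (A : {set 'I_n}) : g \in G0 -> #|A| != 2%N -> g A = 0.
Proof.
rewrite inE => /pffun_onP[supp _] nA; apply/eqP; apply: contraNT nA => gA.
by have := subsetP supp A; rewrite !inE => /(_ gA).
Qed.

Lemma Eg_inj g h : g \in G0 -> h \in G0 -> code d (Eg g) = code d (Eg h) -> g = h.
Proof.
move=> gG hG hc; apply/ffunP => A.
case: (boolP (#|A| == 2%N)) => [/cards2P [x [y [xy ->]]] | nA]; last first.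
  by rewrite !G0_zero.
wlog lt : x y xy / (x < y)%N.
  move=> W; case: (ltngtP x y) => [lt|lt|eq]; first exact: W.
    by rewrite setUC; apply: W; rewrite // eq_sym.
  by case/eqP: xy; apply: val_inj.
have up : forall f : {ffun {set 'I_n} -> R}, forall k l : 'I_n, (l <= k)%N -> Eg f k l = 0.
  by move=> f k l lk; rewrite /Eg ltnNge lk.
have := code_Phi x (sum_dl xy) hc; rewrite (Phi_delta (up g)) // (Phi_delta (up h)) // => h1.
by have := oppr_inj h1; rewrite /Eg lt.
Qed.

End Family.

Lemma two_bin2 n : 2 * 'C(n, 2) = n * n.-1.
Proof.
elim: n => // n IH; rewrite binS bin1 mulnDr IH /=; case: n {IH} => //= n; nia.
Qed.

Lemma expn_mono a b e : a <= b -> a ^ e <= b ^ e.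
Proof. by move=> h; elim: e => // e IH; rewrite !expnS leq_mul. Qed.

Theorem corollary3 (p k s : nat) (hp : prime p) (hk : 0 < k) (hs : 0 < s) :
  let q := p ^ k in
  forall m : nat, 0 < m ->
  exists N : nat, forall n : nat, N <= n ->
    exists F : {set {set {ffun 'I_n -> 'I_(q ^ 2 * s)}}},
      [/\ (forall M, M \in F -> is_MDS M /\ topolinear M),
          (forall M1 M2, M1 \in F -> M2 \in F -> M1 != M2 -> ~ equivalent M1 M2) &
          q ^ ('C(n, 2) * (m - 1)) <= #|F| ^ m].
Proof.
move=> q m hm.
have hq : 1 < q.
  rewrite /q; apply: (leq_trans (prime_gt1 hp)).
  by rewrite -{1}(expn1 p) leq_pexp2l // prime_gt0.
case: s hs => // s' _.
set Qa := q ^ 2 * s'.+1.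
set K := #|{: {perm 'I_Qa}}|.
have K0 : 0 < K by apply/card_gt0P; exists 1%g.
have [N' HN'] := pow2_big (2 * m) (2 * (3 * K) ^ (2 * m)).
exists N'.+1 => n Hn.
have n0 : 0 < n by apply: leq_trans Hn.
pose R := 'Z_q. pose Z := 'I_s'.+1.
have cT : #|{: R * R * Z}| = Qa.
  by rewrite !card_prod !card_ord Zp_cast // expn2.
pose e (t : R * R * Z) : 'I_Qa := cast_ord cT (enum_rank t).
pose d (i : 'I_Qa) : R * R * Z := enum_val (cast_ord (esym cT) i).
have edK : cancel e d by move=> t; rewrite /d /e cast_ordK enum_rankK.
have deK : cancel d e by move=> i; rewrite /d /e enum_valK cast_ordKV.
pose C := [set code d (Eg g) | g in G0 R n].
have cC : #|C| = q ^ 'C(n, 2).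
  rewrite card_in_imset ?card_G0 ?card_ord ?Zp_cast //.
  by move=> g h gG hG; apply: (Eg_inj edK).
have [F [FC Fne Fcard]] := rep C.
exists F; split => //.
  move=> M /(subsetP FC) /imsetP[g _ ->]; split.
    exact: (code_MDS edK deK _ (Ordinal n0)).
  exact: (code_topolinear edK deK).
set W := #|{: {perm 'I_n} * {ffun 'I_n -> {perm 'I_Qa}}}|.
set J := 1 + 2 * W.
set Cn := 'C(n, 2).
have hP : #|{: {perm 'I_n}}| <= n ^ n.
  have := @leq_card _ _ (@pval 'I_n) val_inj; rewrite card_ffun card_ord //.
have hW : W <= (n * K) ^ n.
  by rewrite /W card_prod card_ffun card_ord expnMn leq_mul.
have y1 : 0 < (n * K) ^ n by rewrite expn_gt0 muln_gt0 n0 K0.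
have h3 : 3 <= 3 ^ n by rewrite -{1}(expn1 3) leq_pexp2l.
set X := 3 * n * K.
have hJ : J <= X ^ n.
  rewrite /X -mulnA expnMn.
  have : 3 * (n * K) ^ n <= 3 ^ n * (n * K) ^ n by rewrite leq_mul.
  rewrite /J; lia.
have hkey : X ^ (2 * m) <= 2 ^ n.-1.
  have := HN' n (ltnW Hn).
  have -> : 2 ^ n = 2 * 2 ^ n.-1 by rewrite -expnS prednK.
  rewrite /X mulnAC expnMn -mulnA leq_pmul2l // => h; apply: leq_trans h.
  by rewrite !expnMn -mulnA mulnCA.
have hJm : J ^ m <= q ^ Cn.
  have h1 : J ^ m <= X ^ (n * m) by rewrite expnM expn_mono.
  apply: (leq_trans h1); rewrite -(@leq_exp2r _ _ 2) //.
  have -> : (X ^ (n * m)) ^ 2 = (X ^ (2 * m)) ^ n.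
    by rewrite -!expnM; congr (X ^ _); lia.
  apply: (leq_trans (expn_mono n hkey)).
  rewrite -expnM -(expnM q) mulnC.
  rewrite -two_bin2 mulnC -/Cn expnM [in X in _ <= X]expnM expn_mono // expn_mono // ltnW.
have hF : (q ^ Cn) ^ m <= #|F| ^ m * J ^ m.
  by rewrite -expnMn expn_mono // -cC.
have Jm0 : 0 < J ^ m by rewrite expn_gt0.
rewrite -(leq_pmul2r Jm0); apply: leq_trans hF.
rewrite -expnM (mulnC Cn m).
apply: (leq_trans (leq_mul (leqnn _) hJm)); rewrite -expnD; apply: leq_pexp2l; first by apply: ltnW.
nia.
Qed.
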